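(* If $\mathbf c_1,\mathbf c_2\in\mathrm{GF}(q^m)^n$ and $d_{\mathrm R}(\mathbf c_1,\mathbf c_2)=r$, then $$|B_r(\mathbf c_1)\cap B_1(\mathbf c_2)|=1+(q^m-q^r){r\brack 1}+(q^r-1){n\brack 1}.$$
   Context: The rank $\mathrm{rk}(\mathbf x)$ of $\mathbf x\in\mathrm{GF}(q^m)^n$ is the maximum number of its coordinates linearly independent over $\mathrm{GF}(q)$, and $d_{\mathrm R}(\mathbf x,\mathbf y)=\mathrm{rk}(\mathbf x-\mathbf y)$. $B_r(\mathbf x)$ is the set of vectors within rank distance $r$ of $\mathbf x$. ${n\brack u}$ denotes the Gaussian binomial coefficient (number of $u$-dimensional subspaces of $\mathrm{GF}(q)^n$); in particular ${n\brack 1}=(q^n-1)/(q-1)$. *)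

(* Defs.v *)
From HB Require Import structures.
From mathcomp Require Import all_boot all_order all_algebra all_field.
Set Implicit Arguments. Unset Strict Implicit. Unset Printing Implicit Defensive.
Import GRing.Theory.
Local Open Scope ring_scope.

(* K is a subfield of the finite field L (this plays the role of GF(q) inside GF(q^m)). *)
Definition is_subfield (L : finFieldType) (K : {set L}) : Prop :=
  [/\ 1 \in K,
      (forall x y, x \in K -> y \in K -> x - y \in K),
      (forall x y, x \in K -> y \in K -> x * y \in K) &
      (forall x, x \in K -> x^-1 \in K)].

Definition coord_indep (L : finFieldType) (K : {set L}) (n : nat)
    (x : 'rV[L]_n) (I : {set 'I_n}) : bool :=
  [forall c : {ffun 'I_n -> L},
    [forall i in I, c i \in K] ==>
    (\sum_(i in I) c i * x ord0 i == 0) ==> [forall i in I, c i == 0]].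

Definition rk (L : finFieldType) (K : {set L}) (n : nat) (x : 'rV[L]_n) : nat :=
  \max_(I : {set 'I_n} | coord_indep K x I) #|I|.

Definition dR (L : finFieldType) (K : {set L}) (n : nat) (x y : 'rV[L]_n) : nat :=
  rk K (x - y).

Definition ballR (L : finFieldType) (K : {set L}) (n : nat) (r : nat) (x : 'rV[L]_n)
  : {set 'rV[L]_n} := [set y | dR K x y <= r]%N.

Definition gauss1 (q k : nat) : nat := ((q ^ k - 1) %/ (q - 1))%N.

(* Main.v *)
Require Import Defs.
From HB Require Import structures.
From mathcomp Require Import all_boot all_order all_algebra all_field.
From mathcomp Require Import ring.
Set Implicit Arguments. Unset Strict Implicit. Unset Printing Implicit Defensive.
Import GRing.Theory.
Local Open Scope ring_scope.

Section Rk.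
Variables (L : finFieldType) (K : {set L}).
Hypothesis HK : is_subfield K.

Lemma K1 : 1 \in K. Proof. by case: HK. Qed.
Lemma KB x y : x \in K -> y \in K -> x - y \in K. Proof. by case: HK => _ H _ _; apply: H. Qed.
Lemma KM x y : x \in K -> y \in K -> x * y \in K. Proof. by case: HK => _ _ H _; apply: H. Qed.
Lemma KV x : x \in K -> x^-1 \in K. Proof. by case: HK => _ _ _ H; apply: H. Qed.
Lemma K0 : 0 \in K. Proof. by rewrite -(subrr 1) KB ?K1. Qed.
Lemma KN x : x \in K -> - x \in K. Proof. by move=> Hx; rewrite -sub0r KB ?K0. Qed.
Lemma KD x y : x \in K -> y \in K -> x + y \in K.
Proof. by move=> Hx Hy; rewrite -(opprK y) KB ?KN. Qed.
Lemma Ksum (I : finType) (P : pred I) (F : I -> L) :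
  (forall i, P i -> F i \in K) -> \sum_(i | P i) F i \in K.
Proof. by move=> H; apply: (big_ind (fun x => x \in K)); [exact: K0 | exact: KD | ]. Qed.

Lemma q_gt1 : (1 < #|K|)%N.
Proof.
apply/card_gt1P; exists 0, 1; split; [exact: K0 | exact: K1 | ].
by rewrite eq_sym oner_eq0.
Qed.

Variable n : nat.
Implicit Types (A I J : {set 'I_n}) (z y : 'I_n -> L).

Definition comb A z : {set L} :=
  [set \sum_(i in A) c i * z i | c : {ffun 'I_n -> L} in pffun_on 0 A (mem K)].

Lemma card_comb_le A z : (#|comb A z| <= #|K| ^ #|A|)%N.
Proof.
by apply: leq_trans (leq_imset_card _ _) _; rewrite card_pffun_on.
Qed.

Lemma pffunP A (c : {ffun 'I_n -> L}) :
  reflect ((forall i, i \in A -> c i \in K) /\ (forall i, i \notin A -> c i = 0))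
          (c \in pffun_on 0 A (mem K)).
Proof.
apply: (iffP pffun_onP) => [[H1 H2]|[H1 H2]]; split.
- by move=> i iA; apply: H2; apply: map_f; rewrite mem_enum.
- move=> i iA; apply/eqP; apply: contraNT iA => ci.
  by apply: (subsetP H1); rewrite inE.
- by apply/subsetP => i; rewrite inE; apply: contraNT => /H2 ->.
- by move=> y /mapP [i]; rewrite mem_enum => iA ->; apply: H1.
Qed.


Lemma comb_mem A z (c : {ffun 'I_n -> L}) :
  c \in pffun_on 0 A (mem K) -> \sum_(i in A) c i * z i \in comb A z.
Proof. by move=> Hc; apply/imsetP; exists c. Qed.

Lemma comb0 A z : 0 \in comb A z.
Proof.
have -> : 0 = \sum_(i in A) ([ffun=> 0] : {ffun 'I_n -> L}) i * z i.
  by rewrite big1 // => i _; rewrite ffunE mul0r.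
by apply: comb_mem; apply/pffunP; split=> i _; rewrite ffunE ?K0.
Qed.

Lemma combD A z u v : u \in comb A z -> v \in comb A z -> u + v \in comb A z.
Proof.
move=> /imsetP [c /pffunP [Hc1 Hc2] ->] /imsetP [c' /pffunP [Hc1' Hc2'] ->].
have -> : \sum_(i in A) c i * z i + \sum_(i in A) c' i * z i =
   \sum_(i in A) [ffun i => c i + c' i] i * z i.
  by rewrite -big_split; apply: eq_bigr => i _; rewrite ffunE mulrDl.
apply: comb_mem; apply/pffunP; split=> i Hi; rewrite ffunE.
  by rewrite KD ?Hc1 ?Hc1'.
by rewrite Hc2 ?Hc2' ?addr0.
Qed.

Lemma combZ A z k u : k \in K -> u \in comb A z -> k * u \in comb A z.
Proof.
move=> Hk /imsetP [c /pffunP [Hc1 Hc2] ->].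
have -> : k * \sum_(i in A) c i * z i = \sum_(i in A) [ffun i => k * c i] i * z i.
  by rewrite mulr_sumr; apply: eq_bigr => i _; rewrite ffunE mulrA.
apply: comb_mem; apply/pffunP; split=> i Hi; rewrite ffunE.
  by rewrite KM ?Hc1.
by rewrite Hc2 ?mulr0.
Qed.

Lemma comb_self A z j : j \in A -> z j \in comb A z.
Proof.
move=> jA.
have -> : z j = \sum_(i in A) [ffun i => (i == j)%:R] i * z i.
  rewrite (bigD1 j) //= ffunE eqxx mul1r big1 ?addr0 // => i /andP [_ ij].
  by rewrite ffunE (negPf ij) mul0r.
apply: comb_mem; apply/pffunP; split=> i Hi; rewrite ffunE.
  by case: (i == j); [exact: K1 | exact: K0].
by case: eqP Hi => // ->; rewrite jA.
Qed.

Lemma comb_trans A J z y :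
  (forall j, j \in J -> y j \in comb A z) -> comb J y \subset comb A z.
Proof.
move=> H; apply/subsetP => u /imsetP [c /pffunP [Hc1 Hc2] ->].
apply: (big_ind (fun u => u \in comb A z)); [exact: comb0 | exact: combD | ].
by move=> j jJ; apply: combZ; [exact: Hc1 | exact: H].
Qed.

Lemma comb_sum A z (c : 'I_n -> L) : (forall i, i \in A -> c i \in K) ->
  \sum_(i in A) c i * z i \in comb A z.
Proof.
move=> H; apply: (big_ind (fun u => u \in comb A z)); [exact: comb0 | exact: combD | ].
by move=> i iA; apply: combZ; [exact: H | exact: comb_self].
Qed.

Lemma indepP (x : 'rV[L]_n) I : coord_indep K x I ->
  forall c : {ffun 'I_n -> L}, (forall i, i \in I -> c i \in K) ->
  \sum_(i in I) c i * x ord0 i = 0 -> forall i, i \in I -> c i = 0.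
Proof.
move=> /forallP H c Hc Hs i iI.
have h1 : [forall i in I, c i \in K] by apply/forall_inP.
by move: (H c); rewrite h1 Hs eqxx /= => /forall_inP /(_ i iI) /eqP.
Qed.

Lemma indepI (x : 'rV[L]_n) I :
  (forall c : {ffun 'I_n -> L}, (forall i, i \in I -> c i \in K) ->
  \sum_(i in I) c i * x ord0 i = 0 -> forall i, i \in I -> c i = 0) ->
  coord_indep K x I.
Proof.
move=> H; apply/forallP => c; apply/implyP => /forall_inP h1; apply/implyP => /eqP h2.
by apply/forall_inP => i iI; apply/eqP; apply: H.
Qed.

Lemma card_comb_indep (x : 'rV[L]_n) I : coord_indep K x I ->
  #|comb I (fun i => x ord0 i)| = (#|K| ^ #|I|)%N.
Proof.
move=> HI; rewrite card_in_imset ?card_pffun_on //.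
move=> c c' /pffunP [Hc1 Hc2] /pffunP [Hc1' Hc2'] /= Heq.
have H0 := indepP HI (c := [ffun i => c i - c' i]).
apply/ffunP => i; case: (boolP (i \in I)) => iI; last by rewrite Hc2 ?Hc2'.
apply/eqP; rewrite -subr_eq0; apply/eqP.
have := H0 _ _ i iI; rewrite ffunE; apply.
  by move=> j jI; rewrite ffunE KB ?Hc1 ?Hc1'.
rewrite (eq_bigr (fun j => c j * x ord0 j - c' j * x ord0 j)).
  by rewrite sumrB Heq subrr.
by move=> j _; rewrite ffunE mulrBl.
Qed.

Lemma rk_ge (x : 'rV[L]_n) I : coord_indep K x I -> (#|I| <= rk K x)%N.
Proof. by move=> HI; rewrite /rk; apply: (@leq_bigmax_cond _ _ (fun I : {set 'I_n} => #|I|) I HI). Qed.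

Lemma rk_le (x : 'rV[L]_n) A z :
  (forall j, x ord0 j \in comb A z) -> (rk K x <= #|A|)%N.
Proof.
move=> H; apply/bigmax_leqP => J HJ.
rewrite -(leq_exp2l _ _ q_gt1) -(card_comb_indep HJ).
apply: leq_trans (card_comb_le A z).
by apply: subset_leq_card; apply: comb_trans => j _; apply: H.
Qed.

Lemma indep0 (x : 'rV[L]_n) : coord_indep K x set0.
Proof. by apply: indepI => c _ _ i; rewrite inE. Qed.

Lemma rk_witness (x : 'rV[L]_n) : exists2 I, coord_indep K x I & #|I| = rk K x.
Proof.
case: (@arg_maxnP _ set0 (coord_indep K x) (fun I => #|I|) (indep0 x)) => I HI Hmax.
exists I => //; apply/eqP; rewrite eqn_leq rk_ge //=.
by apply/bigmax_leqP => J HJ; apply: Hmax.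
Qed.

Lemma maxI (x : 'rV[L]_n) I : coord_indep K x I -> #|I| = rk K x ->
  forall j, x ord0 j \in comb I (fun i => x ord0 i).
Proof.
move=> HI Hr j; case: (boolP (j \in I)) => jI; first exact: comb_self.
have Hn : ~~ coord_indep K x (j |: I).
  apply/negP => /rk_ge; rewrite cardsU1 jI -Hr /=.
  by rewrite add1n ltnn.
apply: contraR Hn => Hxj; apply: indepI => c Hc Hs.
rewrite big_setU1 //= in Hs.
have cj : c j = 0.
  apply/eqP; apply: contraNT Hxj => cj0.
  have -> : x ord0 j = (- (c j)^-1) * \sum_(i in I) c i * x ord0 i.
    move/eqP: Hs; rewrite addr_eq0 => /eqP Hs'.
    by rewrite mulNr -mulrN -Hs' mulrA mulVf // mul1r.
  apply: combZ; first by apply: KN; apply: KV; apply: Hc; rewrite setU11.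
  by apply: comb_sum => i iI; apply: Hc; rewrite setU1r.
have Hs' : \sum_(i in I) c i * x ord0 i = 0 by rewrite cj mul0r add0r in Hs.
move=> i /setU1P [-> //|iI].
by apply: (indepP HI) => // k kI; apply: Hc; rewrite setU1r.
Qed.

Definition mk (a : L) (v : {ffun 'I_n -> L}) : 'rV[L]_n := \row_j (a * v j).

Lemma rk_mk a (v : {ffun 'I_n -> L}) : (forall j, v j \in K) -> (rk K (mk a v) <= 1)%N.
Proof.
move=> Hv; case: (pickP (@predT 'I_n)) => [i0 _|none].
  rewrite -(cards1 i0); apply: (@rk_le _ _ (fun _ => a)) => j.
  rewrite mxE mulrC; apply: combZ => //; apply: comb_self; exact: set11.
apply: leq_trans (_ : #|@set0 'I_n| <= 1)%N; last by rewrite cards0.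
by apply: (@rk_le _ _ (fun _ => a)) => j; have := none j.
Qed.

Lemma rk1_form (e : 'rV[L]_n) : e != 0 -> (rk K e <= 1)%N ->
  exists i0, exists2 v : {ffun 'I_n -> L}, (forall j, v j \in K) /\ v i0 = 1 &
    e ord0 i0 != 0 /\ e = mk (e ord0 i0) v.
Proof.
move=> e0 Hr.
have [i0 Hi0] : exists i0, e ord0 i0 != 0.
  apply/existsP; apply: contraR e0 => /existsPn H; apply/eqP/rowP => j.
  by rewrite mxE; move: (H j); rewrite negbK => /eqP.
have Hind : coord_indep K e [set i0].
  apply: indepI => c _; rewrite big_set1 => /eqP; rewrite mulf_eq0 (negPf Hi0) orbF.
  by move=> /eqP ci i /set1P ->.
have Hrk : #|[set i0]| = rk K e.
  by apply/eqP; rewrite eqn_leq rk_ge // cards1 Hr.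
exists i0, [ffun j => e ord0 j / e ord0 i0]; last first.
  split => //; apply/rowP => j; rewrite !mxE ord1 ffunE mulrC -mulrA mulVf ?mulr1 //.
split; last by rewrite ffunE divff.
move=> j; rewrite ffunE.
have /imsetP [c /pffunP [Hc1 _] ->] := maxI Hind Hrk j.
by rewrite big_set1 mulfK // Hc1 // set11.
Qed.

Section Main.
Variables (d : 'rV[L]_n) (I : {set 'I_n}).
Hypotheses (HI : coord_indep K d I) (Hr : #|I| = rk K d).

Let S := comb I (fun i => d ord0 i).

Lemma dS j : d ord0 j \in S. Proof. exact: maxI. Qed.

Lemma cardS : #|S| = (#|K| ^ #|I|)%N. Proof. exact: card_comb_indep. Qed.

Lemma S0 : 0 \in S. Proof. exact: comb0. Qed.

Lemma alpha_ex j : exists c : {ffun 'I_n -> L},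
  (c \in pffun_on 0 I (mem K)) && (d ord0 j == \sum_(i in I) c i * d ord0 i).
Proof. by have /imsetP [c Hc ->] := dS j; exists c; rewrite Hc eqxx. Qed.

Definition alpha j : {ffun 'I_n -> L} := xchoose (alpha_ex j).

Lemma alphaK j i : alpha j i \in K.
Proof.
have /andP [/pffunP [H1 H2] _] := xchooseP (alpha_ex j).
by case: (boolP (i \in I)) => iI; [apply: H1 | rewrite H2 // K0].
Qed.

Lemma alphaE j : d ord0 j = \sum_(i in I) alpha j i * d ord0 i.
Proof. by have /andP [_ /eqP] := xchooseP (alpha_ex j). Qed.

Definition Rset : {set {ffun 'I_n -> L}} :=
  [set v | (v \in ffun_on (mem K)) &&
     [forall j, (j \notin I) ==> (v j == \sum_(i in I) alpha j i * v i)]].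

Definition ext (w : {ffun 'I_n -> L}) : {ffun 'I_n -> L} :=
  [ffun j => if j \in I then w j else \sum_(i in I) alpha j i * w i].

Lemma cardR : #|Rset| = (#|K| ^ #|I|)%N.
Proof.
have -> : Rset = [set ext w | w in pffun_on 0 I (mem K)].
  apply/setP => v; apply/idP/idP.
  - rewrite inE => /andP [/ffun_onP Hv /forall_inP Hj].
    apply/imsetP; exists [ffun j => if j \in I then v j else 0].
      by apply/pffunP; split => i iI; rewrite ffunE; [rewrite iI; exact: Hv | rewrite (negPf iI)].
    apply/ffunP => j; rewrite ffunE; case: ifP => jI; first by rewrite ffunE jI.
    rewrite (eqP (Hj j _)) ?jI //; apply: eq_bigr => i iI.
    by rewrite ffunE iI.
  - move=> /imsetP [w /pffunP [Hw1 Hw2] ->]; rewrite inE; apply/andP; split.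
      apply/ffun_onP => j; rewrite ffunE; case: ifP => jI; first exact: Hw1.
      by apply: Ksum => i iI; apply: KM; [apply: alphaK | apply: Hw1].
    apply/forall_inP => j jI; rewrite ffunE (negPf jI); apply/eqP.
    by apply: eq_bigr => i iI; rewrite ffunE iI.
rewrite card_in_imset ?card_pffun_on //.
move=> w w' /pffunP [Hw1 Hw2] /pffunP [Hw1' Hw2'] /ffunP Heq.
apply/ffunP => j; case: (boolP (j \in I)) => jI; last by rewrite Hw2 ?Hw2'.
by have := Heq j; rewrite !ffunE jI.
Qed.

Lemma key a (v : {ffun 'I_n -> L}) : a \notin S -> v \in ffun_on (mem K) ->
  (rk K (d + mk a v) <= #|I|)%N = (v \in Rset).
Proof.
move=> aS Hv; set y := d + mk a v.
have yE j : y ord0 j = d ord0 j + a * v j by rewrite !mxE.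
have vK j : v j \in K by move/ffun_onP: Hv; apply.
apply/idP/idP; last first.
  rewrite inE Hv /= => /forall_inP Hj; apply: (@rk_le _ _ (fun i => y ord0 i)) => j.
  case: (boolP (j \in I)) => jI; first exact: comb_self.
  have -> : y ord0 j = \sum_(i in I) alpha j i * y ord0 i.
    rewrite (yE j) (eqP (Hj j jI)) (alphaE j) mulr_sumr -big_split.
    apply: eq_bigr => i _; rewrite (yE i) /=. ring.
  by apply: comb_sum => i _; apply: alphaK.
move=> Hrk; apply: contraLR Hrk => HvR.
rewrite inE Hv /= in HvR; move/forall_inPn: HvR => [j jI Hneq].
have Hind : coord_indep K y (j |: I).
  apply: indepI => c Hc Hs; rewrite big_setU1 //= in Hs.
  have cK i : i \in I -> c i \in K by move=> iI; apply: Hc; rewrite setU1r.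
  have cjK : c j \in K by apply: Hc; rewrite setU11.
  set t := \sum_(i in I) c i * v i + c j * v j.
  set u := \sum_(i in I) (c i + c j * alpha j i) * d ord0 i.
  have Hut : u + a * t = 0.
    rewrite -Hs.
    have e1 : u = \sum_(i in I) c i * d ord0 i + c j * \sum_(i in I) alpha j i * d ord0 i.
      by rewrite /u mulr_sumr -big_split; apply: eq_bigr => i _ /=; ring.
    have e2 : \sum_(i in I) c i * y ord0 i =
        \sum_(i in I) c i * d ord0 i + a * \sum_(i in I) c i * v i.
      by rewrite mulr_sumr -big_split; apply: eq_bigr => i _; rewrite yE /=; ring.
    by rewrite e1 e2 (yE j) (alphaE j) /t; ring.
  have tK : t \in K.
    by apply: KD; [apply: Ksum => i iI; apply: KM; [apply: cK | apply: vK] | apply: KM].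
  have uS : u \in S.
    by apply: comb_sum => i iI; apply: KD; [apply: cK | apply: KM => //; apply: alphaK].
  have ht : t = 0.
    apply/eqP; apply: contraR aS => t0.
    move/eqP: Hut; rewrite addrC addr_eq0 => /eqP Hat.
    have -> : a = (- t^-1) * u by rewrite mulNr -mulrN -Hat mulrC mulfK.
    by apply: combZ => //; apply: KN; apply: KV.
  have hu : u = 0 by rewrite ht mulr0 addr0 in Hut.
  have hci : forall i, i \in I -> c i + c j * alpha j i = 0.
    move=> i iI; have := @indepP d I HI [ffun k => c k + c j * alpha j k] _ _ i iI.
    rewrite ffunE; apply.
      by move=> k kI; rewrite ffunE; apply: KD; [apply: cK | apply: KM => //; apply: alphaK].
    by transitivity u; [apply: eq_bigr => k _; rewrite ffunE | exact: hu].
  have cj0 : c j = 0.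
    have : c j * (v j - \sum_(i in I) alpha j i * v i) = 0.
      transitivity t; last exact: ht; rewrite /t.
      have -> : \sum_(i in I) c i * v i = \sum_(i in I) - (c j * alpha j i) * v i.
        by apply: eq_bigr => i iI; move/eqP: (hci i iI); rewrite addr_eq0 => /eqP ->.
      have e3 : \sum_(i in I) - (c j * alpha j i) * v i = - (c j * \sum_(i in I) alpha j i * v i).
        by rewrite mulr_sumr -sumrN; apply: eq_bigr => i _ /=; ring.
      by rewrite e3; ring.
    by move/eqP; rewrite mulf_eq0 subr_eq0 (negPf Hneq) orbF => /eqP.
  move=> i /setU1P [-> // | iI].
  by move: (hci i iI); rewrite cj0 mul0r addr0.
have jI' : j \notin I := jI.
by rewrite -ltnNge; apply: leq_trans (rk_ge Hind); rewrite cardsU1 jI'.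
Qed.

Lemma inS a (v : {ffun 'I_n -> L}) : a \in S -> v \in ffun_on (mem K) ->
  (rk K (d + mk a v) <= #|I|)%N.
Proof.
move=> aS /ffun_onP Hv; apply: (@rk_le _ _ (fun i => d ord0 i)) => j.
rewrite !mxE; apply: combD; first exact: dS.
by rewrite mulrC; apply: combZ => //; apply: Hv.
Qed.

Definition P : {set L * {ffun 'I_n -> L}} :=
  [set p | [&& p.1 != 0, p.2 \in ffun_on (mem K), p.2 != 0 &
              (rk K (d + mk p.1 p.2) <= #|I|)%N]].

Definition T : {set 'rV[L]_n} :=
  [set e | (rk K e <= 1)%N && (rk K (d + e) <= #|I|)%N].

Local Notation z0 := (0 : {ffun 'I_n -> L}).

Lemma cardP_sum : #|P| =
  ((#|K| ^ #|I| - 1) * (#|K| ^ n - 1) + (#|L| - #|K| ^ #|I|) * (#|K| ^ #|I| - 1))%N.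
Proof.
have -> : #|P| = (\sum_(a : L) #|[set v | (a, v) \in P]|)%N.
  transitivity (\sum_(a : L) \sum_(v : {ffun 'I_n -> L}) (if (a, v) \in P then 1 else 0))%N.
    by rewrite pair_big /= -sum1_card big_mkcond /=; apply: eq_bigr => [[a v]] _.
  by apply: eq_bigr => a _; rewrite -big_mkcond /= sum1dep_card.
set F := [set v : {ffun 'I_n -> L} | v \in ffun_on (mem K)].
have cF : #|F :\ z0| = (#|K| ^ n - 1)%N.
  have := cardsD1 z0 F; rewrite inE.
  have -> : z0 \in ffun_on (mem K).
    by apply/ffun_onP => j; rewrite ffunE K0.
  by rewrite cardsE card_ffun_on card_ord => ->; rewrite add1n subn1.
have cR : #|Rset :\ z0| = (#|K| ^ #|I| - 1)%N.
  have := cardsD1 z0 Rset; rewrite cardR.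
  have -> : z0 \in Rset.
    rewrite inE; apply/andP; split; first by apply/ffun_onP => j; rewrite ffunE K0.
    apply/forall_inP => j _; rewrite ffunE; apply/eqP/esym; by apply: big1 => i _; rewrite ffunE mulr0.
  by move=> ->; rewrite add1n subn1.
have f0 : #|[set v | ((0 : L), v) \in P]| = 0%N.
  by apply: eq_card0 => v; rewrite !inE eqxx.
have fS a : a \in S :\ 0 -> #|[set v | (a, v) \in P]| = (#|K| ^ n - 1)%N.
  move=> /setD1P [a0 aS]; rewrite -cF; apply: eq_card => v.
  rewrite !inE /= a0 /=; case: (boolP [forall x, v x \in mem K]) => Hv; last by rewrite andbF.
  by rewrite (inS aS Hv) /= !andbT.
have fN a : a \in ~: S -> #|[set v | (a, v) \in P]| = (#|K| ^ #|I| - 1)%N.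
  rewrite inE => aS; rewrite -cR; apply: eq_card => v.
  have a0 : a != 0 by apply: contraNneq aS => ->; exact: S0.
  case: (boolP (v \in ffun_on (mem K))) => Hv.
    by rewrite in_setD1 -(key aS Hv) inE /= inE /= a0 Hv.
  have h1 : v \notin Rset by rewrite inE; apply: contraNN Hv => /andP [].
  have h2 : (a, v) \notin P by rewrite inE; apply: contraNN Hv => /and4P [].
  by rewrite in_setD1 (negbTE h1) andbF inE (negbTE h2).
rewrite (bigID (mem S)) /=.
have -> : (\sum_(a | a \in S) #|[set v | (a, v) \in P]|)%N = (\sum_(a in S) #|[set v | (a, v) \in P]|)%N by [].
rewrite (big_setD1 0 S0) /= f0 add0n.
rewrite (eq_bigr (fun _ => (#|K| ^ n - 1)%N)); last by move=> a; apply: fS.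
rewrite sum_nat_const.
have -> : (\sum_(a | a \notin S) #|[set v | (a, v) \in P]|)%N =
    (\sum_(a in ~: S) #|[set v | (a, v) \in P]|)%N.
  by apply: eq_bigl => a; rewrite inE.
rewrite (eq_bigr (fun _ => (#|K| ^ #|I| - 1)%N)); last by move=> a; apply: fN.
have cC : #|~: S| = (#|L| - #|K| ^ #|I|)%N by rewrite -cardS -(cardsC S) addKn.
have cS0 : #|S :\ 0| = (#|K| ^ #|I| - 1)%N.
  by have := cardsD1 0 S; rewrite S0 cardS add1n => ->; rewrite subn1.
by rewrite sum_nat_const cC cS0.
Qed.

Lemma mk_neq0 a (v : {ffun 'I_n -> L}) : a != 0 -> v != z0 -> mk a v != 0.
Proof.
move=> a0 v0; apply: contraNneq v0 => /rowP H; apply/eqP/ffunP => j.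
by move: (H j); rewrite !mxE ffunE => /eqP; rewrite mulf_eq0 (negPf a0) /= => /eqP.
Qed.

Local Notation r0 := (0 : 'rV[L]_n).

Lemma cardP_fib : #|P| = ((#|K| - 1) * #|T :\ r0|)%N.
Proof.
rewrite -sum1_card (partition_big (fun p : L * {ffun 'I_n -> L} => mk p.1 p.2)
                      (mem (T :\ r0))) /=; last first.
  move=> [a v]; rewrite inE /= => /and4P [a0 /ffun_onP Hv v0 Hrk].
  by rewrite in_setD1 mk_neq0 // inE rk_mk.
rewrite mulnC -sum_nat_const; apply: eq_bigr => e /setD1P [e0 eT].
rewrite sum1dep_card.
have eT' := eT; rewrite inE in eT'; case/andP: eT' => e1 eR.
have [i0 [v0 [v0K v01] [a00 eE]]] := rk1_form e0 e1.
set a0 := e ord0 i0 in a00 eE.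
have -> : [set p | (p \in P) && (mk p.1 p.2 == e)] =
    [set (a0 / t, [ffun j => t * v0 j]) | t in K :\ 0].
  apply/setP => -[b w]; rewrite inE /=; apply/idP/idP.
  - move=> /andP []; rewrite inE /= => /and4P [b0 /ffun_onP Hw w0 _] /eqP Hmk.
    have Hj j : b * w j = a0 * v0 j.
      by move/rowP: Hmk => /(_ j); rewrite eE !mxE.
    have Ht : b * w i0 = a0 by rewrite Hj v01 mulr1.
    have t0 : w i0 != 0 by apply: contraNneq a00 => H0; rewrite -Ht H0 mulr0.
    apply/imsetP; exists (w i0); first by rewrite in_setD1 t0 Hw.
    apply: f_equal2; first by rewrite -Ht mulfK.
    apply/ffunP => j; rewrite ffunE; apply: (mulfI b0).
    by rewrite Hj mulrA Ht.
  - move=> /imsetP [t /setD1P [t0 tK] [-> ->]].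
    have Hmk : mk (a0 / t) [ffun j => t * v0 j] = e.
      by rewrite eE; apply/rowP => j; rewrite !mxE ffunE mulrA divfK.
    rewrite Hmk eqxx andbT inE /= Hmk; apply/and4P; split => //.
    + by rewrite mulf_neq0 // invr_eq0.
    + by apply/ffun_onP => j; rewrite ffunE KM.
    + apply/negP => /eqP /ffunP /(_ i0); rewrite !ffunE v01 mulr1 => /eqP.
      exact/negP.
rewrite card_imset.
  by have := cardsD1 0 K; rewrite K0 add1n => ->; rewrite subn1.
move=> t t' /= [] /(mulfI a00) /invr_inj //.
Qed.

End Main.
End Rk.

Lemma gaussK q k : (0 < q)%N -> (gauss1 q k * (q - 1) = q ^ k - 1)%N.
Proof.
move=> q0; rewrite /gauss1 divnK // !subn1 predn_exp; exact: dvdn_mulr.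
Qed.

Unset Implicit Arguments.

Theorem proposition3 (L : finFieldType) (K : {set L}) (m n r : nat)
    (c1 c2 : 'rV[L]_n) :
  is_subfield K ->
  #|L| = (#|K| ^ m)%N ->
  dR K c1 c2 = r ->
  #|ballR K r c1 :&: ballR K 1 c2| =
    (1 + (#|K| ^ m - #|K| ^ r) * gauss1 #|K| r
       + (#|K| ^ r - 1) * gauss1 #|K| n)%N.
Proof.
move=> HK HL Hd.
set d := c1 - c2.
have [I HI Hr] := rk_witness K d.
have rE : #|I| = r by rewrite Hr.
have -> : ballR K r c1 :&: ballR K 1 c2 = [set c2 - e | e in T K d I].
  apply/setP => y; rewrite !inE /dR; apply/andP/imsetP.
  - move=> [H1 H2]; exists (c2 - y); last by rewrite opprB addrC subrK.
    rewrite inE H2 /= rE; suff -> : d + (c2 - y) = c1 - y by [].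
    by rewrite /d addrA subrK.
  - move=> [e]; rewrite inE => /andP [H1 H2] ->.
    have E1 : c2 - (c2 - e) = e by rewrite opprB addrC subrK.
    have E2 : c1 - (c2 - e) = d + e by rewrite /d opprB addrA addrAC.
    by rewrite E1 E2 H1 -rE.

rewrite card_imset; last by move=> e e' /= /addrI /oppr_inj.
have T0 : (0 : 'rV[L]_n) \in T K d I.
  rewrite inE addr0 -Hr leqnn andbT.
  apply: leq_trans (_ : #|@set0 'I_n| <= 1)%N; last by rewrite cards0.
  by apply: (@rk_le _ _ HK _ _ _ (fun _ => 0)) => j; rewrite mxE; apply: comb0.
rewrite (cardsD1 0) T0 -addnA; congr (_ + _)%N.
have q1 : (0 < #|K| - 1)%N by rewrite subn_gt0 (q_gt1 HK).
apply/eqP; rewrite -(eqn_pmul2l q1) -cardP_fib // (cardP_sum HK HI Hr) rE HL.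
rewrite mulnDr !mulnA ![((#|K| - 1) * _)%N]mulnC -!mulnA.
have q0 : (0 < #|K|)%N by apply: ltnW; apply: (q_gt1 HK).
by rewrite ![((#|K| - 1) * gauss1 _ _)%N]mulnC !gaussK // addnC.
Qed.
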